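(* Let $G=(V,E)$ be a connected simple graph with $n$ vertices and let $\ell\ge 2$ be an integer. Then $$\sum_{uv\in E}\frac{1}{P(uv,\ell)+\ell}\ \ge\ \frac{n-1}{\ell},$$ where the sum runs over the edges of $G$, each counted once.
   Context: For vertices $u,v$ and an integer $\ell$, $P(uv,\ell)$ denotes the maximum number of internally vertex-disjoint paths in $G$ between $u$ and $v$ each having length (number of edges) between $2$ and $\ell$ inclusive. *)

(* Defs.v *)
From Stdlib Require Import ClassicalEpsilon.
From HB Require Import structures.
From mathcomp Require Import all_boot all_order all_algebra.
Set Implicit Arguments. Unset Strict Implicit. Unset Printing Implicit Defensive.

Definition simple_graph (T : finType) (e : rel T) : Prop :=
  symmetric e /\ irreflexive e.

Definition connected_graph (T : finType) (e : rel T) : Prop :=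
  forall x y : T, connect e x y.

(* A u-v path with internal vertex sequence s: u, s_1, ..., s_k, v,
   consecutive vertices adjacent, all vertices distinct.  Its length
   (number of edges) is size s + 1. *)
Definition uv_path (T : finType) (e : rel T) (u v : T) (s : seq T) : bool :=
  path e u (rcons s v) && uniq (u :: rcons s v).

Definition short_path (T : finType) (e : rel T) (l : nat) (u v : T) (s : seq T) : bool :=
  [&& uv_path e u v s, 2 <= (size s).+1 & (size s).+1 <= l].

Definition disjoint_short_family (T : finType) (e : rel T) (l : nat) (u v : T)
    (F : seq (seq T)) : Prop :=
  (forall s, s \in F -> short_path e l u v s) /\
  (forall i j, i < size F -> j < size F -> i != j ->
     forall x, x \in nth [::] F i -> x \notin nth [::] F j).

Definition asbool (P : Prop) : bool :=
  if excluded_middle_informative P then true else false.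

(* Such a family has at most #|T| members
   (internal vertex sets are nonempty and pairwise disjoint), so the
   maximum over k <= #|T| is the true maximum. *)
Definition Pnum (T : finType) (e : rel T) (u v : T) (l : nat) : nat :=
  \max_(k < #|T|.+1 | asbool (exists F, disjoint_short_family e l u v F /\ size F = k)) k.

(* Main.v *)
Require Import Defs.
From Stdlib Require Import ClassicalEpsilon.
From HB Require Import structures.
From mathcomp Require Import all_boot all_order all_algebra.
From mathcomp Require Import ring lra.
Import Order.TTheory GRing.Theory Num.Theory.
Set Implicit Arguments. Unset Strict Implicit. Unset Printing Implicit Defensive.
Local Open Scope ring_scope.

Definition Ed (T : finType) (e : rel T) (g : T * T) : bool :=
  e g.1 g.2 && (enum_rank g.1 < enum_rank g.2)%N.
Definition Bi (T : finType) (x : T) (g : T * T) : rat :=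
  (x == g.1)%:R - (x == g.2)%:R.
Definition Mf (T : finType) (e : rel T) (x y : T) : rat :=
  \sum_(g | Ed e g) Bi x g * Bi y g + 1.
Definition Mm (T : finType) (e : rel T) : 'M[rat]_#|T| :=
  \matrix_(i, j) Mf e (enum_val i) (enum_val j).
Definition Wf (T : finType) (e : rel T) (x y : T) : rat :=
  invmx (Mm e) (enum_rank x) (enum_rank y).
Definition Pi (T : finType) (e : rel T) (g h : T * T) : rat :=
  \sum_x \sum_y Bi x g * Wf e x y * Bi y h.
Definition isflow (T : finType) (e : rel T) (h : T * T) (f : T * T -> rat) :=
  forall z, \sum_(g | Ed e g) Bi z g * f g = Bi z h.

Lemma sum_reindexT (T : finType) (F : T -> rat) :
  \sum_(x : T) F x = \sum_(i < #|T|) F (enum_val i).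
Proof.
rewrite (reindex (@enum_val T (pred_of_simpl predT))) //=.
by exists (@enum_rank T) => i _; rewrite ?enum_valK ?enum_rankK.
Qed.

Lemma sumBi_l (T : finType) (F : T -> rat) (g : T * T) :
  \sum_(x : T) F x * Bi x g = F g.1 - F g.2.
Proof.
rewrite /Bi; under eq_bigr do rewrite mulrBr.
rewrite sumrB; congr (_ - _).
  rewrite (bigD1 g.1) //= eqxx mulr1 big1 ?addr0 // => x /negbTE ->; by rewrite mulr0.
rewrite (bigD1 g.2) //= eqxx mulr1 big1 ?addr0 // => x /negbTE ->; by rewrite mulr0.
Qed.

Lemma sumBi (T : finType) (g : T * T) : \sum_(x : T) Bi x g = 0.
Proof.
have := sumBi_l (fun _ : T => (1 : rat)) g; rewrite subrr => H; rewrite -[X in _ = X]H; apply: eq_bigr => x _; by rewrite mul1r.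
Qed.

Lemma W1 (T : finType) (e : rel T) (x z : T) : Mm e \in unitmx ->
  \sum_y Mf e x y * Wf e y z = (x == z)%:R.
Proof.
move=> U; have := congr1 (fun A : 'M_#|T| => A (enum_rank x) (enum_rank z)) (mulmxV U).
rewrite !mxE (inj_eq enum_rank_inj) => <-.
rewrite sum_reindexT; apply: eq_bigr => j _.
by rewrite /Wf /Mm mxE enum_rankK enum_valK.
Qed.

Lemma W2 (T : finType) (e : rel T) (x z : T) : Mm e \in unitmx ->
  \sum_y Wf e x y * Mf e y z = (x == z)%:R.
Proof.
move=> U; have := congr1 (fun A : 'M_#|T| => A (enum_rank x) (enum_rank z)) (mulVmx U).
rewrite !mxE (inj_eq enum_rank_inj) => <-.
rewrite sum_reindexT; apply: eq_bigr => j _.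
by rewrite /Wf /Mm mxE enum_rankK enum_valK.
Qed.

Lemma Mf_sym (T : finType) (e : rel T) x y : Mf e x y = Mf e y x.
Proof. by rewrite /Mf; congr (_ + _); apply: eq_bigr => g _; rewrite mulrC. Qed.

Lemma Mf_rowsum (T : finType) (e : rel T) x : \sum_y Mf e x y = #|T|%:R.
Proof.
rewrite /Mf big_split /= sumr_const exchange_big /=.
rewrite big1 ?add0r // => g _; by rewrite -mulr_sumr sumBi mulr0.
Qed.

Lemma Mf_colsum (T : finType) (e : rel T) y : \sum_x Mf e x y = #|T|%:R.
Proof. by rewrite -(Mf_rowsum e y); apply: eq_bigr => x _; rewrite Mf_sym. Qed.

Lemma Wcol (T : finType) (e : rel T) z : Mm e \in unitmx ->
  #|T|%:R * \sum_y Wf e y z = 1.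
Proof.
move=> U.
have : \sum_x \sum_y Mf e x y * Wf e y z = 1.
  by under eq_bigr do rewrite W1 //; rewrite (bigD1 z) //= eqxx big1 ?addr0 // => x /negbTE ->.
rewrite exchange_big /= => H; rewrite -[RHS]H mulr_sumr; apply: eq_bigr => y _.
by rewrite -mulr_suml Mf_colsum mulrC.
Qed.

Lemma Wrow (T : finType) (e : rel T) x : Mm e \in unitmx ->
  #|T|%:R * \sum_y Wf e x y = 1.
Proof.
move=> U.
have : \sum_z \sum_y Wf e x y * Mf e y z = 1.
  by under eq_bigr do rewrite W2 //; rewrite (bigD1 x) //= eqxx big1 ?addr0 // => z; rewrite eq_sym => /negbTE ->.
rewrite exchange_big /= => H; rewrite -[RHS]H mulr_sumr; apply: eq_bigr => y _.
by rewrite -mulr_sumr Mf_rowsum mulrC.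
Qed.

Definition phi (T : finType) (e : rel T) (k : T * T) (x : T) : rat :=
  \sum_y Wf e x y * Bi y k.

Lemma PiE (T : finType) (e : rel T) g k : Pi e g k = \sum_x Bi x g * phi e k x.
Proof.
by apply: eq_bigr => x _; rewrite /phi mulr_sumr; apply: eq_bigr => y _; rewrite mulrA.
Qed.

Lemma flowPi (T : finType) (e : rel T) h k f : isflow e h f ->
  \sum_(g | Ed e g) Pi e g k * f g = Pi e h k.
Proof.
move=> Hf; rewrite [RHS]PiE.
under eq_bigr do rewrite PiE mulr_suml.
rewrite exchange_big /=; apply: eq_bigr => x _.
rewrite -Hf mulr_suml; apply: eq_bigr => g _; ring.
Qed.

Lemma Piflow (T : finType) (e : rel T) k : Mm e \in unitmx ->
  isflow e k (fun g => Pi e g k).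
Proof.
move=> U z /=.
under eq_bigr do rewrite PiE mulr_sumr.
rewrite exchange_big /=.
have E1 : forall x, \sum_(g | Ed e g) Bi z g * (Bi x g * phi e k x) = (Mf e z x - 1) * phi e k x.
  by move=> x; rewrite /Mf addrK mulr_suml; apply: eq_bigr => g _; rewrite mulrA.
under eq_bigr do rewrite E1 mulrBl mul1r.
rewrite sumrB.
have -> : \sum_x Mf e z x * phi e k x = Bi z k.
  rewrite /phi; under eq_bigr do rewrite mulr_sumr.
  rewrite exchange_big /=.
  under eq_bigr => y _ do (rewrite (eq_bigr (fun x => Mf e z x * Wf e x y * Bi y k)); last by move=> x _; rewrite mulrA).
  under eq_bigr do rewrite -mulr_suml W1 //.
  rewrite (bigD1 z) //= eqxx mul1r big1 ?addr0 // => y /negbTE; rewrite eq_sym => ->; by rewrite mul0r.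
have -> : \sum_x phi e k x = 0.
  rewrite /phi exchange_big /=.
  have Hc : forall y, \sum_x Wf e x y = #|T|%:R^-1.
    move=> y; have H := Wcol y U.
    have N0 : (#|T|%:R : rat) != 0.
      by apply/eqP => N0; move: H; rewrite N0 mul0r => /eqP; rewrite eq_sym oner_eq0.
    by apply: (mulfI N0); rewrite H mulfV.
  under eq_bigr do rewrite -mulr_suml Hc.
  by rewrite -mulr_sumr sumBi mulr0.
by rewrite subr0.
Qed.

Lemma energy_lb (T : finType) (e : rel T) h f : Mm e \in unitmx -> isflow e h f ->
  Pi e h h <= \sum_(g | Ed e g) f g ^+ 2.
Proof.
move=> U Hf.
have S2 : \sum_(g | Ed e g) Pi e g h * f g = Pi e h h by apply: flowPi.
have S3 : \sum_(g | Ed e g) Pi e g h * Pi e g h = Pi e h h by apply: flowPi; apply: Piflow.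
have S0 : 0 <= \sum_(g | Ed e g) (f g - Pi e g h) ^+ 2 by apply: sumr_ge0 => g _; apply: sqr_ge0.
have E : \sum_(g | Ed e g) (f g - Pi e g h) ^+ 2 =
   \sum_(g | Ed e g) f g ^+ 2 - 2 * \sum_(g | Ed e g) Pi e g h * f g + \sum_(g | Ed e g) Pi e g h * Pi e g h.
  rewrite mulr_sumr -sumrB -big_split /=; apply: eq_bigr => g _; ring.
rewrite E S2 S3 in S0; lra.
Qed.

Lemma trace_Pi (T : finType) (e : rel T) (x0 : T) : Mm e \in unitmx ->
  \sum_(h | Ed e h) Pi e h h = #|T|%:R - 1.
Proof.
move=> U.
have E : \sum_(h | Ed e h) Pi e h h = \sum_x \sum_y Wf e x y * (Mf e y x - 1).
  rewrite /Pi exchange_big /=; apply: eq_bigr => x _.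
  rewrite exchange_big /=; apply: eq_bigr => y _.
  rewrite /Mf addrK mulr_sumr; apply: eq_bigr => g _; ring.
have E2 : forall x, \sum_y Wf e x y * (Mf e y x - 1) = 1 - \sum_y Wf e x y.
  by move=> x; under eq_bigr do rewrite mulrBr mulr1; rewrite sumrB W2 // eqxx.
rewrite E; under eq_bigr do rewrite E2.
rewrite sumrB sumr_const; congr (_ - _).
have H := Wrow x0 U.
have N0 : (#|T|%:R : rat) != 0.
  by apply/eqP => N0; move: H; rewrite N0 mul0r => /eqP; rewrite eq_sym oner_eq0.
have Hr : forall x, \sum_y Wf e x y = #|T|%:R^-1.
  by move=> x; apply: (mulfI N0); rewrite Wrow // mulfV.
under eq_bigr do rewrite Hr.
by rewrite sumr_const -[_ *+ _]mulr_natr mulVf.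
Qed.

Lemma Munit (T : finType) (e : rel T) : simple_graph e -> connected_graph e ->
  Mm e \in unitmx.
Proof.
move=> [esy _] econn.
rewrite unitmxE unitfE; apply/negP => /det0P [v v0 vM].
pose vf := fun x : T => v 0 (enum_rank x).
have H1 : forall y, \sum_x vf x * Mf e x y = 0.
  move=> y; have := congr1 (fun A : 'rV_#|T| => A 0 (enum_rank y)) vM; rewrite !mxE => H; rewrite -[RHS]H.
  rewrite sum_reindexT; apply: eq_bigr => j _.
  by rewrite /vf enum_valK /Mm mxE enum_rankK.
have H2 : \sum_y vf y * (\sum_x vf x * Mf e x y) = 0.
  by rewrite big1 // => y _; rewrite H1 mulr0.
pose D := fun g : T * T => \sum_x vf x * Bi x g.
have H3 : \sum_y vf y * (\sum_x vf x * Mf e x y) =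
    \sum_(g | Ed e g) D g ^+ 2 + (\sum_x vf x) ^+ 2.
  have -> : \sum_y vf y * (\sum_x vf x * Mf e x y) =
      \sum_y \sum_x (\sum_(g | Ed e g) (vf x * Bi x g) * (vf y * Bi y g) + vf x * vf y).
    apply: eq_bigr => y _; rewrite mulr_sumr; apply: eq_bigr => x _.
    rewrite /Mf !mulrDr !mulr1 mulr_sumr mulr_sumr; congr (_ + _); last by ring.
    by apply: eq_bigr => g _; ring.
  under eq_bigr do rewrite big_split /=.
  rewrite big_split /=; congr (_ + _).
    rewrite exchange_big /=.
    under eq_bigr do rewrite exchange_big /=.
    rewrite exchange_big /=; apply: eq_bigr => g _.
    rewrite expr2 /D mulr_suml; apply: eq_bigr => x _.
    by rewrite mulr_sumr; apply: eq_bigr => y _.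
  rewrite expr2 mulr_suml exchange_big /=; apply: eq_bigr => y _.
  by rewrite mulr_sumr; apply: eq_bigr => x _; rewrite mulrC.
rewrite H3 in H2.
have Hs : forall g, Ed e g -> 0 <= D g ^+ 2 by move=> g _; apply: sqr_ge0.
move/eqP: H2; rewrite paddr_eq0 ?sumr_ge0 ?sqr_ge0 // => /andP [/eqP/psumr_eq0P HD HS].
have HD' := HD Hs.
have Hedge : forall a b, e a b -> vf a = vf b.
  move=> a b eab.
  case: (ltngtP (enum_rank a) (enum_rank b)) => Hab.
  - have := HD' (a, b); rewrite /Ed /= eab Hab => /(_ isT) /eqP.
    by rewrite sqrf_eq0 /D sumBi_l subr_eq0 => /eqP.
  - have := HD' (b, a); rewrite /Ed /= esy eab Hab => /(_ isT) /eqP.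
    by rewrite sqrf_eq0 /D sumBi_l subr_eq0 => /eqP.
  - by rewrite (enum_rank_inj (val_inj Hab)).
have Hconn : forall x y, vf x = vf y.
  move=> x y; have /connectP [p pp ->] := econn x y.
  elim: p x pp => [|z p IH] x //= /andP [exz pz].
  by rewrite (Hedge _ _ exz) IH.
move/negP: v0; apply; apply/eqP/rowP => j; rewrite mxE.
pose x0 := enum_val j.
have N0 : (#|T|%:R : rat) != 0.
  by rewrite pnatr_eq0 -lt0n; apply/card_gt0P; exists x0.
have : (\sum_x vf x) = #|T|%:R * vf x0.
  by rewrite mulr_natl -sumr_const; apply: eq_bigr => x _; apply: Hconn.
move: HS; rewrite sqrf_eq0 => /eqP -> /esym /eqP.
rewrite mulf_eq0 (negbTE N0) /= => /eqP.
by rewrite /vf /x0 enum_valK.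
Qed.

Definition chi (T : finType) (st g : T * T) : rat :=
  (g == st)%:R - (g == (st.2, st.1))%:R.

Definition nsw (T : finType) (st st' : T * T) : bool :=
  (st != st') && (st != (st'.2, st'.1)).

Lemma sum_delta (T : finType) (P : pred (T * T)) (F : T * T -> rat) c :
  \sum_(g | P g) F g * (g == c)%:R = (P c)%:R * F c.
Proof.
rewrite big_mkcond (bigD1 c) //= eqxx mulr1 big1 ?addr0.
  by case: (P c); rewrite ?mul1r ?mul0r.
by move=> g /negbTE ->; case: (P g); rewrite ?mulr0.
Qed.

Lemma Bi_swap (T : finType) z (a b : T) : Bi z (b, a) = - Bi z (a, b).
Proof. by rewrite /Bi opprB. Qed.

Lemma chi_flow (T : finType) (e : rel T) a b z : simple_graph e -> e a b ->
  \sum_(g | Ed e g) Bi z g * chi (a, b) g = Bi z (a, b).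
Proof.
move=> [esy eirr] eab.
rewrite /chi; under eq_bigr do rewrite mulrBr.
rewrite sumrB !sum_delta /Ed /=.
case: (ltngtP (enum_rank a) (enum_rank b)) => Hab.
- by rewrite eab ?andbT ?andbF /= mul1r mul0r subr0.
- by rewrite (esy b a) eab ?andbT ?andbF /= mul1r mul0r sub0r Bi_swap opprK.
- by move: eab; rewrite (enum_rank_inj (val_inj Hab)) eirr.
Qed.

Lemma chi_sq (T : finType) (e : rel T) a b : simple_graph e -> e a b ->
  \sum_(g | Ed e g) chi (a, b) g ^+ 2 = 1.
Proof.
move=> [esy eirr] eab.
have ab : a != b by apply/eqP => E; move: eab; rewrite E eirr.
have E : forall g, chi (a, b) g ^+ 2 = 1 * (g == (a, b))%:R + 1 * (g == (b, a))%:R.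
  move=> g; rewrite /chi /=.
  have [-> | n1] := eqVneq g (a, b).
    by rewrite !xpair_eqE ?eqxx (negbTE ab) /=; ring.
  by case: (g == (b, a)) => /=; ring.
under eq_bigr do rewrite E.
rewrite big_split /= !sum_delta /Ed /=.
case: (ltngtP (enum_rank a) (enum_rank b)) => Hab.
- by rewrite eab ?andbT ?andbF /= !mulr1 addr0.
- by rewrite (esy b a) eab ?andbT ?andbF /= !mulr1 add0r.
- by move: eab; rewrite (enum_rank_inj (val_inj Hab)) eirr.
Qed.

Lemma chi_supp (T : finType) (st g : T * T) :
  chi st g != 0 -> (g == st) || (g == (st.2, st.1)).
Proof. by rewrite /chi; case: (g == st); case: (g == _); rewrite ?subrr ?eqxx. Qed.

Lemma chi_orth (T : finType) (st st' g : T * T) : nsw st st' ->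
  chi st g * chi st' g = 0.
Proof.
case: st => a b; case: st' => c d; rewrite /nsw /=.
move=> /andP [n1 n2]; apply/eqP; rewrite mulf_eq0.
apply/negPn/negP => /norP [/chi_supp h1 /chi_supp h2].
move: h1 h2 => /= /orP [] /eqP -> /orP [] /eqP [E3 E4]; subst;
  by rewrite ?eqxx in n1 n2.
Qed.

Lemma nsw_sep (T : finType) (st st' : T * T) (a : T) :
  (a == st.1) || (a == st.2) -> a != st'.1 -> a != st'.2 -> nsw st st'.
Proof.
case: st => p q; case: st' => c d /= H n1 n2; rewrite /nsw !xpair_eqE.
by case/orP: H => /eqP E; subst a; apply/andP; split; apply/negP => /andP [/eqP E1 /eqP E2];
  subst; rewrite ?eqxx in n1 n2.
Qed.

Definition fl (T : finType) (S : seq ((T * T) * rat)) (g : T * T) : rat :=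
  \sum_(p <- S) p.2 * chi p.1 g.

Lemma fl_flow (T : finType) (e : rel T) (S : seq ((T * T) * rat)) z :
  simple_graph e -> all (fun p => e p.1.1 p.1.2) S ->
  \sum_(g | Ed e g) Bi z g * fl S g = \sum_(p <- S) p.2 * Bi z p.1.
Proof.
move=> sg; elim: S => [|p S IH] /=.
  by move=> _; rewrite big_nil big1 // => g _; rewrite /fl big_nil mulr0.
case/andP => ep eS.
rewrite big_cons -IH // /fl.
under eq_bigr do rewrite big_cons mulrDr.
rewrite big_split /=; congr (_ + _).
case: p ep => [[a b] c] /= eab.
rewrite -(chi_flow z sg eab) mulr_sumr; apply: eq_bigr => g _; ring.
Qed.

Lemma fl_energy (T : finType) (e : rel T) (S : seq ((T * T) * rat)) :
  simple_graph e -> all (fun p => e p.1.1 p.1.2) S ->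
  pairwise (fun p q => nsw p.1 q.1) S ->
  \sum_(g | Ed e g) fl S g ^+ 2 = \sum_(p <- S) p.2 ^+ 2.
Proof.
move=> sg; elim: S => [|p S IH] /=.
  by move=> _ _; rewrite big_nil big1 // => g _; rewrite /fl big_nil expr0n.
case/andP => ep eS /andP [np nS].
rewrite big_cons -IH //.
have orth : forall g, chi p.1 g * fl S g = 0.
  move=> g; rewrite /fl mulr_sumr big_seq big1 // => q qS.
  have := allP np q qS => /= nq.
  by rewrite mulrCA chi_orth ?mulr0.
have E : forall g, fl (p :: S) g ^+ 2 = p.2 ^+ 2 * chi p.1 g ^+ 2 + fl S g ^+ 2.
  move=> g; have := orth g; rewrite /fl big_cons => o.
  rewrite sqrrD; set t := \sum_(q <- S) _ in o *.
  have -> : p.2 * chi p.1 g * t *+ 2 = p.2 * (chi p.1 g * t) *+ 2 by rewrite mulrA.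
  by rewrite o mulr0 mul0rn addr0 exprMn.
under eq_bigr do rewrite E.
rewrite big_split /= -mulr_sumr.
case: p ep {np orth E} => [[a b] c] /= eab.
by rewrite (chi_sq sg eab) mulr1.
Qed.

Fixpoint stp (T : Type) (x : T) (t : seq T) : seq (T * T) :=
  if t is y :: t' then (x, y) :: stp y t' else [::].

Lemma stp_tele (T : finType) (z x : T) t :
  \sum_(st <- stp x t) Bi z st = (z == x)%:R - (z == last x t)%:R.
Proof.
elim: t x => [|y t IH] x /=; first by rewrite big_nil subrr.
by rewrite big_cons IH /Bi /=; ring.
Qed.

Lemma stp_edge (T : finType) (e : rel T) x t :
  path e x t -> all (fun st => e st.1 st.2) (stp x t).
Proof. by elim: t x => [|y t IH] x //= /andP [-> /IH ->]. Qed.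

Lemma stp_size (T : Type) (x : T) t : size (stp x t) = size t.
Proof. by elim: t x => [|y t IH] x //=; rewrite IH. Qed.

Lemma stp_mem (T : finType) (x : T) t st :
  st \in stp x t -> (st.1 \in x :: t) && (st.2 \in x :: t).
Proof.
elim: t x => [|y t IH] x //=.
rewrite in_cons => /orP [/eqP -> | /IH /andP [h1 h2]] /=.
  by rewrite !in_cons !eqxx !orbT.
by rewrite in_cons h1 orbT /= in_cons h2 orbT.
Qed.

Lemma stp_uniq (T : finType) (x : T) t :
  uniq (x :: t) -> pairwise (@nsw T) (stp x t).
Proof.
elim: t x => [|y t IH] x //= /andP [xn /IH ->]; rewrite andbT.
apply/allP => q /stp_mem /andP [q1 q2].
apply: (@nsw_sep _ _ _ x); rewrite /= ?eqxx //.
  by apply/eqP => E; move: xn; rewrite E q1.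
by apply/eqP => E; move: xn; rewrite E q2.
Qed.

Lemma stp_first (T : finType) (x : T) s v st :
  st \in stp x (rcons s v) -> st.1 \in x :: s.
Proof.
elim: s x => [|y s IH] x /=.
  by rewrite in_cons in_nil orbF => /eqP -> /=; rewrite mem_head.
rewrite in_cons => /orP [/eqP -> | /IH h] /=; first by rewrite mem_head.
by rewrite in_cons h orbT.
Qed.

Lemma stp_int (T : finType) (u : T) s v st : s != [::] ->
  st \in stp u (rcons s v) -> exists2 a, a \in s & (a == st.1) || (a == st.2).
Proof.
case: s => [//| y s] _ /=.
rewrite in_cons => /orP [/eqP -> | h].
  by exists y; rewrite ?mem_head //= eqxx orbT.
by exists st.1; [apply: (stp_first h) | rewrite eqxx].
Qed.

Definition allsteps (T : finType) (u v : T) (y : rat) (F : seq (seq T)) :=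
  flatten [seq [seq (st, y) | st <- stp u (rcons s v)] | s <- F].

Lemma mem_allsteps (T : finType) (u v : T) y F q :
  q \in allsteps u v y F -> exists2 s', s' \in F & q.1 \in stp u (rcons s' v).
Proof.
elim: F => [|s F IH] //=; rewrite mem_cat => /orP [/mapP [st st_in ->] | /IH [s' s'F qs']].
  by exists s; rewrite ?mem_head.
by exists s'; rewrite // in_cons s'F orbT.
Qed.

Lemma fam_tail (T : finType) (e : rel T) l u v s F :
  disjoint_short_family e l u v (s :: F) -> disjoint_short_family e l u v F.
Proof.
move=> [Hs Hd]; split.
  by move=> s' s'in; apply: Hs; rewrite in_cons s'in orbT.
by move=> i j hi hj hij x; apply: (Hd i.+1 j.+1).
Qed.

Lemma fam_head (T : finType) (e : rel T) l u v s F :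
  disjoint_short_family e l u v (s :: F) ->
  short_path e l u v s /\ (forall s', s' \in F -> forall x, x \in s -> x \notin s').
Proof.
move=> [Hs Hd]; split; first by apply: Hs; rewrite mem_head.
move=> s' s'F x xs.
have := Hd 0%N (index s' F).+1 isT; rewrite /= ltnS index_mem nth_index // => /(_ s'F isT x xs).
by [].
Qed.

Lemma sum_const_seq (A : Type) (r : seq A) (c : rat) : \sum_(i <- r) c = c * (size r)%:R.
Proof.
elim: r => [|a r IH]; first by rewrite big_nil mulr0.
by rewrite big_cons IH /= mulrS; ring.
Qed.

Lemma allsteps_cons (T : finType) (u v : T) y F z :
  \sum_(p <- allsteps u v y F) p.2 * Bi z p.1 =
  y * (size F)%:R * ((z == u)%:R - (z == v)%:R).
Proof.
elim: F => [|s F IH]; first by rewrite big_nil mulr0 mul0r.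
rewrite /allsteps /= big_cat big_map -/(allsteps u v y F) IH /=.
rewrite -mulr_sumr stp_tele last_rcons mulrS; ring.
Qed.

Lemma allsteps_energy (T : finType) (e : rel T) l (u v : T) y F :
  disjoint_short_family e l u v F ->
  \sum_(p <- allsteps u v y F) p.2 ^+ 2 <= y ^+ 2 * (size F)%:R * l%:R.
Proof.
elim: F => [|s F IH] H; first by rewrite big_nil mulr0 mul0r.
have [sp _] := fam_head H.
have := IH (fam_tail H).
rewrite /allsteps /= big_cat big_map -/(allsteps u v y F) /= sum_const_seq stp_size size_rcons.
move: sp; rewrite /short_path => /and3P [_ _ sl].
have : ((size s).+1%:R : rat) <= l%:R by rewrite ler_nat.
have y2 : 0 <= y ^+ 2 by apply: sqr_ge0.
rewrite mulrS => h1 h2.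
have := ler_wpM2l y2 h1; nra.
Qed.

Lemma allsteps_edge (T : finType) (e : rel T) l (u v : T) y F :
  disjoint_short_family e l u v F ->
  all (fun p => e p.1.1 p.1.2) (allsteps u v y F).
Proof.
elim: F => [|s F IH] H //.
have [sp _] := fam_head H.
rewrite /allsteps /= all_cat -/(allsteps u v y F) (IH (fam_tail H)) andbT all_map.
move: sp; rewrite /short_path /uv_path => /and3P [/andP [pth _] _ _].
exact: stp_edge pth.
Qed.

Lemma nsw_sym (T : finType) (st st' : T * T) : nsw st st' = nsw st' st.
Proof.
case: st => a b; case: st' => c d; rewrite /nsw /= !xpair_eqE.
by rewrite (eq_sym c a) (eq_sym d b) (eq_sym c b) (eq_sym d a); case: (a == c); case: (b == d);
  case: (a == d); case: (b == c).
Qed.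

Lemma short_nonempty (T : finType) (e : rel T) l u v s :
  short_path e l u v s -> [/\ s != [::], u \notin s, v \notin s, u != v &
    forall w, w \in u :: rcons s v -> w \in s \/ w = u \/ w = v].
Proof.
rewrite /short_path /uv_path => /and3P [/andP [_ un] s2 _].
move: un; rewrite /= rcons_uniq mem_rcons in_cons negb_or => /andP [/andP [uv us] /andP [vs _]].
split => //.
- by apply/eqP => E; move: s2; rewrite E.
- move=> w; rewrite in_cons mem_rcons in_cons.
  by case/or3P => [/eqP -> | /eqP -> | ws]; auto.
Qed.

Lemma allsteps_pairwise (T : finType) (e : rel T) l (u v : T) y F :
  disjoint_short_family e l u v F ->
  pairwise (fun p q => nsw p.1 q.1) (allsteps u v y F).
Proof.
elim: F => [|s F IH] H //.
have [sp Hdis] := fam_head H.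
rewrite /allsteps /= pairwise_cat -/(allsteps u v y F) (IH (fam_tail H)) andbT pairwise_map.
apply/andP; split; last first.
  have [_ _ _ _ _] := short_nonempty sp.
  move: sp; rewrite /short_path /uv_path => /and3P [/andP [_ un] _ _].
  exact: stp_uniq.
apply/allrelP => p q /mapP [st stin ->] /mem_allsteps [s' s'F qin] /=.
have [sne us vs _ _] := short_nonempty sp.
have [a aS aend] := stp_int sne stin.
have /andP [q1 q2] := stp_mem qin.
have anq : forall w, w \in u :: rcons s' v -> a != w.
  move=> w; rewrite in_cons mem_rcons in_cons => /or3P [/eqP -> | /eqP -> | ws'].
  - by apply/eqP => E; move: us; rewrite -E aS.
  - by apply/eqP => E; move: vs; rewrite -E aS.
  - by apply/eqP => E; move: (Hdis s' s'F a aS); rewrite E ws'.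
by apply: (nsw_sep aend); apply: anq.
Qed.

Lemma allsteps_head (T : finType) (e : rel T) l (u v : T) y F :
  disjoint_short_family e l u v F ->
  all (fun q => nsw (u, v) q.1) (allsteps u v y F).
Proof.
move=> H; apply/allP => q /mem_allsteps [s' s'F qin].
have sp : short_path e l u v s' by case: H => Hs _; apply: Hs.
have [sne us vs _ _] := short_nonempty sp.
have [a aS aend] := stp_int sne qin.
rewrite nsw_sym; apply: (nsw_sep aend) => /=.
  by apply/eqP => E; move: us; rewrite -E aS.
by apply/eqP => E; move: vs; rewrite -E aS.
Qed.

Lemma Pnum_attained (T : finType) (e : rel T) u v l :
  exists F, disjoint_short_family e l u v F /\ size F = Pnum e u v l.
Proof.
rewrite /Pnum.
set P := fun k : 'I_#|T|.+1 => asbool (exists F, disjoint_short_family e l u v F /\ size F = k).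
have P0 : P ord0.
  rewrite /P /asbool; case: excluded_middle_informative => // H; case: H.
  exists [::]; split; last by [].
  split; first by move=> s; rewrite in_nil.
  by [].
rewrite (@bigop.bigmax_eq_arg _ ord0 _ _ P0).
case: arg_maxnP => // i Pi _.
move: Pi; rewrite /P /asbool; case: excluded_middle_informative => [[F [HF HS]] _|//].
by exists F.
Qed.

Lemma edge_bound (T : finType) (e : rel T) (l : nat) (u v : T) :
  simple_graph e -> Mm e \in unitmx -> e u v -> (0 < l)%N ->
  Pi e (u, v) (u, v) <= l%:R / ((Pnum e u v l)%:R + l%:R).
Proof.
move=> sg U euv l0.
have [F [HF HP]] := Pnum_attained e u v l.
rewrite -HP.
set D := (size F)%:R + l%:R.
have D0 : D != 0.
  by rewrite /D -natrD pnatr_eq0 addn_eq0 negb_and -(lt0n l) l0 orbT.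
pose x := l%:R / D.
pose y := D^-1.
pose S := ((u, v), x) :: allsteps u v y F.
have Sedge : all (fun p => e p.1.1 p.1.2) S by rewrite /= euv (allsteps_edge y HF).
apply: (le_trans (energy_lb U (f := fl S) _)).
  move=> z; rewrite (fl_flow z sg Sedge) big_cons allsteps_cons /= /Bi /= /x /y /D.
  by field.
rewrite (fl_energy sg Sedge); last first.
  by rewrite /= (allsteps_head y HF) (allsteps_pairwise y HF).
rewrite big_cons /=.
have := allsteps_energy y HF.
have -> : l%:R / D = x ^+ 2 + y ^+ 2 * (size F)%:R * l%:R.
  by rewrite /x /y; move: D0; rewrite /D => D0; field.
move=> h; lra.
Qed.

Theorem mainTheorem7 (T : finType) (e : rel T) (l : nat) :
  simple_graph e -> connected_graph e -> (2 <= l)%N ->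
  \sum_(u : T) \sum_(v : T | e u v && (enum_rank u < enum_rank v)%N)
      (1 / ((Pnum e u v l)%:R + l%:R) : rat)
  >= (#|T|%:R - 1) / l%:R.
Proof.
move=> sg conn l2.
have l0 : (0 < l)%N by apply: leq_trans l2.
have lpos : (0 : rat) < l%:R by rewrite ltr0n.
have U := Munit sg conn.
case: (pickP (fun _ : T => true)) => [x0 _ | T0]; last first.
  have -> : (#|T|%:R : rat) = 0.
    by have -> : #|T| = 0%N by apply: eq_card0 => x; have := T0 x.
  rewrite big1; last by move=> x; have := T0 x.
  by rewrite sub0r mulNr oppr_le0 mul1r invr_ge0 ltW.
rewrite pair_big_dep /=.
rewrite (eq_bigl (Ed e)) //.
have key : (#|T|%:R - 1 : rat) <= \sum_(p | Ed e p) l%:R / ((Pnum e p.1 p.2 l)%:R + l%:R).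
  rewrite -(trace_Pi x0 U); apply: ler_sum => [[a b]] /= Ep.
  apply: edge_bound => //; by case/andP: Ep.
rewrite ler_pdivrMr //.
apply: (le_trans key); rewrite mulr_suml; apply: ler_sum => p _.
by rewrite mul1r mulrC.
Qed.
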